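(* Let $\mathcal{X}$ be a finite set, $\pi$ a probability mass function on $\mathcal{X}$ with full support, and $P$ a $\pi$-reversible transition matrix on $\mathcal{X}$. Let a group $\mathcal{G}$ act on $\mathcal{X}$ with orbits $\mathcal{O}_1,\dots,\mathcal{O}_k$, and let $G$ be the associated Gibbs orbit kernel. Then $\gamma(P)\ge\gamma(GPG)$. Equality holds when the maximum-achieving orbit $\mathcal{O}_i$ (in the definition of $\gamma(P)$) satisfies that $\sum_{y\notin\mathcal{O}_i}P(x,y)$ is the same for all $x\in\mathcal{O}_i$.
   Context: The Gibbs orbit kernel is $G(x,y)=\pi(y)/\pi(\mathcal{O}(x))$ if $y\in\mathcal{O}(x)$ (the orbit of $x$), and $0$ otherwise, where $\pi(A)=\sum_{z\in A}\pi(z)$. For a transition matrix $K$, $\gamma(K):=\max_{i\in\{1,\dots,k\}}\max_{x\in\mathcal{O}_i}\sum_{y\in\mathcal{X}\setminus\mathcal{O}_i}K(x,y)$. *)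

(* Defs.v *)
From HB Require Import structures.
From mathcomp Require Import all_boot all_order all_algebra all_fingroup.
Set Implicit Arguments. Unset Strict Implicit. Unset Printing Implicit Defensive.
Import Order.TTheory GRing.Theory Num.Theory.
Local Open Scope ring_scope.

Section Defs.
Variable R : realFieldType.
Variable X : finType.

Definition full_support_pmf (pi : X -> R) : Prop :=
  (forall x, 0 < pi x) /\ \sum_x pi x = 1.

Definition transition_matrix (P : X -> X -> R) : Prop :=
  (forall x y, 0 <= P x y) /\ (forall x, \sum_y P x y = 1).

Definition reversible (pi : X -> R) (P : X -> X -> R) : Prop :=
  forall x y, pi x * P x y = pi y * P y x.

Definition kmul (K L : X -> X -> R) : X -> X -> R :=
  fun x y => \sum_z K x z * L z y.

Variable gT : finGroupType.
Variable H : {group gT}.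
Variable to : {action gT &-> X}.

Definition massof (pi : X -> R) (A : {set X}) : R := \sum_(z in A) pi z.

Definition gibbs_orbit_kernel (pi : X -> R) : X -> X -> R :=
  fun x y => if y \in orbit to H x then pi y / massof pi (orbit to H x) else 0.

Definition out_orbit (K : X -> X -> R) (x : X) : R :=
  \sum_(y | y \notin orbit to H x) K x y.

(* gamma(K) = max_i max_{x in O_i} sum_{y notin O_i} K(x,y)
            = max_x sum_{y notin O(x)} K(x,y)  (orbits partition X) *)
Definition gamma (K : X -> X -> R) : R :=
  \big[Num.max/0]_x out_orbit K x.
End Defs.

(* Main.v *)
Require Import Defs.
From HB Require Import structures.
From mathcomp Require Import all_boot all_order all_algebra all_fingroup.
Import Order.TTheory GRing.Theory Num.Theory.
Local Open Scope ring_scope.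

Section Aux.
Variables (R : realFieldType) (X : finType) (gT : finGroupType)
  (H : {group gT}) (to : {action gT &-> X}) (pi : X -> R).
Hypothesis pipos : forall x, 0 < pi x.

Local Notation O x := (orbit to H x).
Local Notation G := (gibbs_orbit_kernel H to pi).

Lemma mass_pos x : 0 < massof pi (O x).
Proof.
rewrite /massof (bigD1 x) ?orbit_refl //=.
apply: lt_le_trans (pipos x) _; rewrite lerDl; apply: sumr_ge0 => i _.
exact: ltW.
Qed.

Lemma sumG x w :
  \sum_(y | y \notin O x) G w y = if w \in O x then 0 else 1.
Proof.
case: ifP => hw.
  apply: big1 => y hy; rewrite /gibbs_orbit_kernel.
  by move/orbit_eqP: hw => ->; rewrite (negbTE hy).
have -> : \sum_(y | y \notin O x) G w y = \sum_y G w y.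
  rewrite [RHS](bigID (fun y => y \in O x)) /= [X in _ = X + _]big1 ?add0r // => y hy.
  rewrite /gibbs_orbit_kernel; case: ifP => // hyw.
  move/orbit_eqP: hy => e1; move/orbit_eqP: hyw => e2.
  have : O w = O x by rewrite -e2 e1.
  by move/orbit_eqP; rewrite hw.
rewrite /gibbs_orbit_kernel -big_mkcond /= -mulr_suml.
by rewrite divff // gt_eqF // mass_pos.
Qed.

Lemma out_GPG P x :
  out_orbit H to (kmul (kmul G P) G) x =
  \sum_(z in O x) pi z / massof pi (O x) * out_orbit H to P z.
Proof.
rewrite /out_orbit /kmul /=.
rewrite exchange_big /=.
under eq_bigr do rewrite -big_distrr /= sumG.
rewrite (bigID (fun w => w \in O x)) /= big1 ?add0r; last first.
  by move=> w ->; rewrite mulr0.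
under eq_bigr => w hw do rewrite (negbTE hw) mulr1.
rewrite exchange_big /=.
under eq_bigr do rewrite -big_distrr /=.
rewrite [RHS]big_mkcond /=; apply: eq_bigr => z _.
rewrite /gibbs_orbit_kernel; case: ifP => hz; last by rewrite mul0r.
by move/orbit_eqP: hz => ->.
Qed.

Lemma gamma_ge0 (K : X -> X -> R) : 0 <= gamma H to K.
Proof.
rewrite /gamma; elim/big_rec: _ => //= i v _ hv.
by rewrite le_max hv orbT.
Qed.

Lemma out_le_gamma (K : X -> X -> R) x : out_orbit H to K x <= gamma H to K.
Proof.
by rewrite /gamma (bigD1 x) //= le_max lexx.
Qed.

Lemma gamma_le (K : X -> X -> R) c :
  0 <= c -> (forall x, out_orbit H to K x <= c) -> gamma H to K <= c.
Proof.
move=> c0 hc; rewrite /gamma; elim/big_ind: _ => //= a b ha hb.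
by rewrite ge_max ha hb.
Qed.

Lemma weights_sum x : \sum_(z in O x) pi z / massof pi (O x) = 1.
Proof.
by rewrite -mulr_suml divff // gt_eqF // mass_pos.
Qed.
End Aux.

Theorem proposition2p5 (R : realFieldType) (X : finType) (gT : finGroupType)
  (H : {group gT}) (to : {action gT &-> X})
  (pi : X -> R) (P : X -> X -> R) :
  full_support_pmf pi ->
  transition_matrix P ->
  reversible pi P ->
  let G := gibbs_orbit_kernel H to pi in
  gamma H to (kmul (kmul G P) G) <= gamma H to P /\
  (forall x0 : X,
     gamma H to P = out_orbit H to P x0 ->
     (forall x, x \in orbit to H x0 ->
        out_orbit H to P x = out_orbit H to P x0) ->
     gamma H to P = gamma H to (kmul (kmul G P) G)).
Proof.
move=> [pipos _] _ _ G.
have hle : gamma H to (kmul (kmul G P) G) <= gamma H to P.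
  apply: gamma_le; first exact: gamma_ge0.
  move=> x; rewrite out_GPG //.
  rewrite -[X in _ <= X]mul1r -(@weights_sum _ _ _ H to _ pipos x) mulr_suml.
  apply: ler_sum => z _; apply: ler_wpM2l; last exact: out_le_gamma.
  by rewrite divr_ge0 ?ltW ?mass_pos.
split=> // x0 hg hc.
apply: le_anti; rewrite hle andbT.
apply: (le_trans _ (@out_le_gamma _ _ _ H to _ x0)).
rewrite out_GPG // hg.
rewrite -[X in X <= _]mul1r -(@weights_sum _ _ _ H to _ pipos x0) mulr_suml.
by rewrite le_eqVlt; apply/orP; left; apply/eqP; apply: eq_bigr => z hz; rewrite hc.
Qed.
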